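(* Consider a PIR scheme for a graph $G=(\mathcal{S},\mathcal{W})$. Let $S\in\mathcal{S}$ be a server of degree $\delta$ and let $S_1,\dots,S_\delta$ be any enumeration of its neighbors. Then \[ H(A_S)\ \ge\ \sum_{i=1}^{\delta}\max\Big\{0,\ L-\sum_{j=i}^{\delta}H(A_{S_j})\Big\}, \] where $A_T$ denotes the answer of server $T$.
   Context: Graph-based PIR model (non-colluding servers, 2-replication). A simple graph $G=(\mathcal{S},\mathcal{W})$ has vertex set $\mathcal{S}$ of $N$ servers and edge set $\mathcal{W}=\{W_1,\dots,W_K\}$ of files; each file is identified with the edge of the two servers storing it, $W_{T}$ denotes the set of files stored on server $T$. Files are independent, each uniform on $\mathbb{F}_2^L$. A user wants $W_\theta$, $\theta$ uniform on $[K]$ and independent of the files; it generates one query per server, $\mathcal{Q}$ denoting the set of all queries, with $\mathcal{Q}$ independent of the files. Each server $T$ returns an answer $A_T$ that is a deterministic function of its query and $W_T$. Reliability: $W_\theta$ is determined by all answers and queries. Privacy: for each server $T$, $H(\theta\mid Q_T,W_T)=\log K$. *)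

(* Defs.v *)
From HB Require Import structures.
From mathcomp Require Import all_boot all_order all_algebra.
From mathcomp Require Import reals exp.
Set Implicit Arguments. Unset Strict Implicit. Unset Printing Implicit Defensive.
Import Order.TTheory GRing.Theory Num.Theory.
Local Open Scope ring_scope.

Section Entropy.
Variable R : realType.

Definition log2 (x : R) : R := ln x / ln 2.

Definition dist {Om A : finType} (P : Om -> R) (X : Om -> A) (a : A) : R :=
  \sum_(w | X w == a) P w.

Definition entropy {Om A : finType} (P : Om -> R) (X : Om -> A) : R :=
  - \sum_(a : A) (if dist P X a == 0 then 0 else dist P X a * log2 (dist P X a)).

Definition centropy {Om A B : finType} (P : Om -> R) (X : Om -> A) (Y : Om -> B) : R :=
  entropy P (fun w => (X w, Y w)) - entropy P Y.
End Entropy.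

(* Servers : finType T.  Files : finType E, each file f stored on the two
   servers of the 2-element set [ends f]; [ends] injective = simple graph.  *)

Definition stored_on {T E : finType} (ends : E -> {set T}) (S : T) (f : E) : bool :=
  S \in ends f.

Definition degree {T E : finType} (ends : E -> {set T}) (S : T) : nat :=
  #|[set f | S \in ends f]|.

Definition neighbor {T E : finType} (ends : E -> {set T}) (S U : T) : Prop :=
  exists f, ends f = [set S; U].

(* The sample space: (theta, queries) together with the file contents. *)
Definition Omega (T E Qt : finType) (L : nat) : finType :=
  ((E * {ffun T -> Qt}) * {ffun E -> 'rV['F_2]_L})%type.

(* Full pmf: the user's pmf on (theta, queries) times the independent
   uniform law of the K files on F_2^L. *)
Definition pir_pmf (R : realType) (T E Qt : finType) (L : nat)
  (pu : E * {ffun T -> Qt} -> R) (w : Omega T E Qt L) : R :=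
  pu w.1 * ((2 ^+ L)^-1) ^+ #|E|.

Definition theta_rv (T E Qt : finType) (L : nat) (w : Omega T E Qt L) : E := w.1.1.
Definition queries_rv (T E Qt : finType) (L : nat) (w : Omega T E Qt L) : {ffun T -> Qt} := w.1.2.
Definition query_rv (T E Qt : finType) (L : nat) (S : T) (w : Omega T E Qt L) : Qt := w.1.2 S.
Definition desired_rv (T E Qt : finType) (L : nat) (w : Omega T E Qt L) : 'rV['F_2]_L :=
  w.2 w.1.1.
(* W_S : the files stored on server S (files not on S are masked by None) *)
Definition stored_rv (T E Qt : finType) (L : nat) (ends : E -> {set T}) (S : T)
  (w : Omega T E Qt L) : {ffun E -> option 'rV['F_2]_L} :=
  [ffun f => if S \in ends f then Some (w.2 f) else None].
Definition answer_rv (T E Qt At : finType) (L : nat)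
  (ans : T -> Qt -> {ffun E -> 'rV['F_2]_L} -> At) (S : T)
  (w : Omega T E Qt L) : At := ans S (w.1.2 S) w.2.
Definition answers_rv (T E Qt At : finType) (L : nat)
  (ans : T -> Qt -> {ffun E -> 'rV['F_2]_L} -> At)
  (w : Omega T E Qt L) : {ffun T -> At} := [ffun S => ans S (w.1.2 S) w.2].

(* Main.v *)
Require Import Defs.
From HB Require Import structures.
From mathcomp Require Import all_boot all_order all_algebra.
From mathcomp Require Import reals exp.
From mathcomp Require Import ring lra.
Import Order.TTheory GRing.Theory Num.Theory.
Local Open Scope ring_scope.
Set Implicit Arguments. Unset Strict Implicit. Unset Printing Implicit Defensive.

Section Gen.
Variable R : realType.

Definition Hn {Om A : finType} (P : Om -> R) (X : Om -> A) : R :=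
  - \sum_a dist P X a * ln (dist P X a).

Lemma entropyE (Om A : finType) (P : Om -> R) (X : Om -> A) :
  entropy P X = Hn P X / ln 2.
Proof.
rewrite /entropy /Hn mulNr; congr (- _).
rewrite big_distrl /=; apply: eq_bigr => a _.
case: eqP => [->|_]; first by rewrite !mul0r.
by rewrite /log2 mulrA.
Qed.

Lemma lotus (Om A : finType) (P : Om -> R) (X : Om -> A) (F : A -> R) :
  \sum_a dist P X a * F a = \sum_w P w * F (X w).
Proof.
rewrite [RHS](partition_big X predT) //=.
apply: eq_bigr => a _; rewrite /dist big_distrl /=.
by apply: eq_bigr => w /eqP <-.
Qed.

Lemma HnE (Om A : finType) (P : Om -> R) (X : Om -> A) :
  Hn P X = - \sum_w P w * ln (dist P X (X w)).
Proof. by rewrite /Hn (lotus P X (fun a => ln (dist P X a))). Qed.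

Lemma dist_ge0 (Om A : finType) (P : Om -> R) (X : Om -> A) a :
  (forall w, 0 <= P w) -> 0 <= dist P X a.
Proof. by move=> P0; apply: sumr_ge0. Qed.

Lemma dist_ge_pt (Om A : finType) (P : Om -> R) (X : Om -> A) w :
  (forall w, 0 <= P w) -> P w <= dist P X (X w).
Proof.
move=> P0; rewrite /dist (bigD1 w) //= lerDl; exact: sumr_ge0.
Qed.

Lemma dist_pos (Om A : finType) (P : Om -> R) (X : Om -> A) w :
  (forall w, 0 <= P w) -> 0 < P w -> 0 < dist P X (X w).
Proof. by move=> P0 Pw; apply: lt_le_trans Pw (dist_ge_pt _ _ P0). Qed.

Lemma sum_dist (Om A : finType) (P : Om -> R) (X : Om -> A) :
  \sum_a dist P X a = \sum_w P w.
Proof.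
rewrite (eq_bigr (fun a => dist P X a * 1)); last by move=> *; rewrite mulr1.
by rewrite lotus; apply: eq_bigr => *; rewrite mulr1.
Qed.

Lemma dist_le_sum (Om A : finType) (P : Om -> R) (X : Om -> A) a :
  (forall w, 0 <= P w) -> dist P X a <= \sum_w P w.
Proof.
move=> P0; rewrite /dist [leLHS]big_mkcond; apply: ler_sum => w _.
by case: ifP.
Qed.

Lemma dist_ext (Om A : finType) (P : Om -> R) (X X' : Om -> A) :
  X =1 X' -> dist P X =1 dist P X'.
Proof. by move=> h a; apply: eq_bigl => w; rewrite h. Qed.

Lemma Hn_ext (Om A : finType) (P : Om -> R) (X X' : Om -> A) :
  X =1 X' -> Hn P X = Hn P X'.
Proof. by move=> h; rewrite /Hn; apply/congr1/eq_bigr => a _; rewrite (dist_ext P h). Qed.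

Lemma dist_sub (Om A B : finType) (P : Om -> R) (Y : Om -> A) (f : A -> B) y :
  (forall w, 0 <= P w) -> dist P Y y <= dist P (fun w => f (Y w)) (f y).
Proof.
move=> P0; rewrite /dist !(big_mkcond (fun w => _ == _)); apply: ler_sum => w _.
case: (eqVneq (Y w) y) => [->|_]; first by rewrite eqxx.
by case: ifP.
Qed.

Lemma ln_le_sub1 (y : R) : 0 < y -> ln y <= y - 1.
Proof.
move=> y0; have e : 1 + (y - 1) = y by lra.
have := @le_ln1Dx R (y - 1); rewrite e; apply; lra.
Qed.

Lemma ln_eq_sub1 (y : R) : 0 < y -> ln y = y - 1 -> y = 1.
Proof.
move=> y0 h; set s := Num.sqrt y.
have s0 : 0 < s by rewrite sqrtr_gt0.
have ys : y = s ^+ 2 by rewrite sqr_sqrtr // ltW.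
have h1 := ln_le_sub1 s0.
have h2 : ln y = ln s *+ 2 by rewrite ys lnXn.
have h5 : s ^+ 2 - 1 <= (s - 1) *+ 2.
  by rewrite -ys -h h2 !mulr2n; lra.
have h3 : (s - 1) ^+ 2 <= 0.
  have e : (s - 1) ^+ 2 = s ^+ 2 - 1 - (s - 1) *+ 2 by ring.
  rewrite e; lra.
have h4 : (s - 1) ^+ 2 = 0 by apply/le_anti; rewrite h3 sqr_ge0.
move/eqP: h4; rewrite sqrf_eq0 subr_eq0 => /eqP s1.
by rewrite ys s1 expr1n.
Qed.

Lemma gibbs_slack (I : finType) (mu nu : I -> R) :
  (forall a, 0 <= mu a) -> (forall a, 0 <= nu a) ->
  (forall a, 0 < mu a -> 0 < nu a) ->
  forall a, 0 <= nu a - mu a - mu a * (ln (nu a) - ln (mu a)).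
Proof.
move=> m0 n0 mn a; have [->|ma] := eqVneq (mu a) 0.
  by rewrite mul0r !subr0.
have mpos : 0 < mu a by rewrite lt0r ma m0.
have npos := mn a mpos.
rewrite -ln_div ?posrE //.
have h : mu a * ln (nu a / mu a) <= mu a * (nu a / mu a - 1).
  by rewrite ler_pM2l // ln_le_sub1 // divr_gt0.
rewrite mulrBr mulrCA divff ?mulr1 // in h; lra.
Qed.

Lemma gibbs (I : finType) (mu nu : I -> R) :
  (forall a, 0 <= mu a) -> (forall a, 0 <= nu a) ->
  (forall a, 0 < mu a -> 0 < nu a) ->
  \sum_a mu a * (ln (nu a) - ln (mu a)) <= \sum_a nu a - \sum_a mu a.
Proof.
move=> m0 n0 mn.
have : 0 <= \sum_a (nu a - mu a - mu a * (ln (nu a) - ln (mu a))).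
  by apply: sumr_ge0 => a _; apply: gibbs_slack.
rewrite !sumrB; lra.
Qed.

Lemma gibbs_eq (I : finType) (mu nu : I -> R) :
  (forall a, 0 <= mu a) -> (forall a, 0 <= nu a) ->
  (forall a, 0 < mu a -> 0 < nu a) ->
  \sum_a mu a * (ln (nu a) - ln (mu a)) = 0 -> \sum_a nu a = \sum_a mu a ->
  forall a, mu a = nu a.
Proof.
move=> m0 n0 mn h0 h1 a.
have hs : \sum_a (nu a - mu a - mu a * (ln (nu a) - ln (mu a))) = 0.
  rewrite !sumrB h0 h1; lra.
have hz := psumr_eq0P (fun a _ => gibbs_slack m0 n0 mn a) hs.
have : nu a - mu a - mu a * (ln (nu a) - ln (mu a)) = 0 by apply: hz.
have [ma0|ma] := eqVneq (mu a) 0.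
  by rewrite ma0 mul0r !subr0 => ->.
have mpos : 0 < mu a by rewrite lt0r ma m0.
have npos := mn a mpos.
rewrite -ln_div ?posrE // => h.
have h2 : ln (nu a / mu a) = nu a / mu a - 1.
  apply: (mulfI ma); rewrite mulrBr mulrCA divff // mulr1; lra.
have := ln_eq_sub1 (divr_gt0 npos mpos) h2.
by move=> h3; rewrite -[nu a](divfK ma) h3 mul1r.
Qed.

End Gen.

Section Ineq.
Variable R : realType.

Lemma exp_ext (Om : finType) (P : Om -> R) (F G : Om -> R) :
  (forall w, 0 <= P w) -> (forall w, 0 < P w -> F w = G w) ->
  \sum_w P w * F w = \sum_w P w * G w.
Proof.
move=> P0 h; apply: eq_bigr => w _.
have [->|pw] := eqVneq (P w) 0; first by rewrite !mul0r.
by rewrite h // lt0r pw P0.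
Qed.

Lemma Hn_mono (Om A B : finType) (P : Om -> R) (Y : Om -> A) (f : A -> B) :
  (forall w, 0 <= P w) -> Hn P (fun w => f (Y w)) <= Hn P Y.
Proof.
move=> P0; rewrite !HnE lerN2; apply: ler_sum => w _.
have [->|pw] := eqVneq (P w) 0; first by rewrite !mul0r.
have pw0 : 0 < P w by rewrite lt0r pw P0.
have h1 := dist_pos Y P0 pw0.
have h2 := dist_pos (fun w => f (Y w)) P0 pw0.
rewrite ler_wpM2l // ler_ln ?posrE //; exact: dist_sub.
Qed.

Lemma Hn_relabel (Om A B : finType) (P : Om -> R) (X : Om -> A) (Y : Om -> B)
  (f : B -> A) (g : A -> B) :
  (forall w, 0 <= P w) -> (forall w, X w = f (Y w)) -> (forall w, Y w = g (X w)) ->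
  Hn P X = Hn P Y.
Proof.
move=> P0 hX hY; apply/le_anti; apply/andP; split.
  by rewrite (Hn_ext P hX); apply: Hn_mono.
by rewrite [leLHS](Hn_ext P hY); apply: Hn_mono.
Qed.

Lemma Hn_const (Om A : finType) (P : Om -> R) (c : A) :
  \sum_w P w = 1 -> Hn P (fun _ => c) = 0.
Proof.
move=> P1; rewrite HnE.
have -> : dist P (fun _ => c) c = 1 by rewrite /dist -P1; apply: eq_bigl => w; rewrite eqxx.
by rewrite ln1 big1 ?oppr0 // => w _; rewrite mulr0.
Qed.

Lemma Hn_ge0 (Om A : finType) (P : Om -> R) (X : Om -> A) :
  (forall w, 0 <= P w) -> \sum_w P w = 1 -> 0 <= Hn P X.
Proof.
move=> P0 P1; rewrite HnE oppr_ge0; apply: sumr_le0 => w _.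
apply: mulr_ge0_le0 => //; apply: ln_le0; rewrite -P1; exact: dist_le_sum.
Qed.

Lemma sum_pair (I J : finType) (F : I * J -> R) :
  \sum_t F t = \sum_i \sum_j F (i, j).
Proof. by rewrite pair_bigA; apply: eq_bigr => -[]. Qed.

Lemma marg (Om A C : finType) (P : Om -> R) (X : Om -> A) (Z : Om -> C) z :
  \sum_x dist P (fun w => (X w, Z w)) (x, z) = dist P Z z.
Proof.
rewrite /dist [RHS](partition_big X predT) //=.
apply: eq_bigr => x _; apply: eq_bigl => w.
by rewrite xpair_eqE andbC.
Qed.

Lemma marg2 (Om A C : finType) (P : Om -> R) (X : Om -> A) (Z : Om -> C) x :
  \sum_z dist P (fun w => (X w, Z w)) (x, z) = dist P X x.
Proof.
by rewrite /dist [RHS](partition_big Z predT) //=.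
Qed.

Lemma Hn_submod (Om A B C : finType) (P : Om -> R)
  (X : Om -> A) (Y : Om -> B) (Z : Om -> C) :
  (forall w, 0 <= P w) ->
  Hn P (fun w => (X w, Y w, Z w)) + Hn P Z <=
  Hn P (fun w => (X w, Z w)) + Hn P (fun w => (Y w, Z w)).
Proof.
move=> P0.
set pT := dist P (fun w => (X w, Y w, Z w)).
set pXZ := dist P (fun w => (X w, Z w)).
set pYZ := dist P (fun w => (Y w, Z w)).
set pZ := dist P Z.
pose nu (t : (A * B) * C) := pXZ (t.1.1, t.2) * pYZ (t.1.2, t.2) / pZ t.2.
have hsub1 t : pT t <= pXZ (t.1.1, t.2).
  have := dist_sub (fun w => (X w, Y w, Z w)) (fun t : (A * B) * C => (t.1.1, t.2)) t P0.
  by rewrite (dist_ext P (X' := fun w => (X w, Z w))).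
have hsub2 t : pT t <= pYZ (t.1.2, t.2).
  have := dist_sub (fun w => (X w, Y w, Z w)) (fun t : (A * B) * C => (t.1.2, t.2)) t P0.
  by rewrite (dist_ext P (X' := fun w => (Y w, Z w))).
have hsub3 t : pT t <= pZ t.2.
  have := dist_sub (fun w => (X w, Y w, Z w)) (fun t : (A * B) * C => t.2) t P0.
  by rewrite (dist_ext P (X' := Z)).
have m0 t : 0 <= pT t by exact: dist_ge0.
have n0 t : 0 <= nu t.
  by rewrite /nu; apply: divr_ge0; [apply: mulr_ge0|]; exact: dist_ge0.
have mn t : 0 < pT t -> 0 < nu t.
  move=> h; rewrite /nu; apply: divr_gt0; [apply: mulr_gt0|].
  - exact: lt_le_trans h (hsub1 t).
  - exact: lt_le_trans h (hsub2 t).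
  - exact: lt_le_trans h (hsub3 t).
have sn : \sum_t nu t = \sum_t pT t.
  rewrite sum_dist sum_pair sum_pair.
  rewrite -(sum_dist P Z).
  under eq_bigr do rewrite exchange_big.
  rewrite exchange_big; apply: eq_bigr => c _ /=.
  have e : \sum_i \sum_j nu (i, j, c) = (\sum_i pXZ (i, c)) * (\sum_j pYZ (j, c)) / pZ c.
    rewrite big_distrl big_distrl /=; apply: eq_bigr => a _.
    rewrite big_distrr big_distrl /=; apply: eq_bigr => b _.
    by rewrite /nu.
  rewrite e /pXZ /pYZ !marg -/pZ.
  have [->|pz] := eqVneq (pZ c) 0; first by rewrite !mul0r.
  by rewrite mulfK.
have g := gibbs m0 n0 mn.
rewrite sn subrr lotus in g.
have e : \sum_w P w * (ln (nu (X w, Y w, Z w)) - ln (pT (X w, Y w, Z w))) =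
  \sum_w P w * ln (pXZ (X w, Z w)) + \sum_w P w * ln (pYZ (Y w, Z w))
  - \sum_w P w * ln (pZ (Z w)) - \sum_w P w * ln (pT (X w, Y w, Z w)).
  rewrite -big_split -!sumrB /=; apply: eq_bigr => w _.
  have [->|pw'] := eqVneq (P w) 0; first by rewrite !mul0r; lra.
  have pw : 0 < P w by rewrite lt0r pw' P0.
  rewrite /nu /= ln_div ?lnM ?posrE; first by ring.
  - exact: (dist_pos (fun w => (X w, Z w)) P0 pw).
  - exact: (dist_pos (fun w => (Y w, Z w)) P0 pw).
  - by apply: mulr_gt0; [exact: (dist_pos (fun w => (X w, Z w)) P0 pw)|
                          exact: (dist_pos (fun w => (Y w, Z w)) P0 pw)].
  - exact: (dist_pos Z P0 pw).
rewrite e in g.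
rewrite !HnE -/pT -/pXZ -/pYZ -/pZ.
lra.
Qed.

End Ineq.

Section Ineq2.
Variable R : realType.

Lemma Hn_subadd (Om A B : finType) (P : Om -> R) (X : Om -> A) (Y : Om -> B) :
  (forall w, 0 <= P w) -> \sum_w P w = 1 ->
  Hn P (fun w => (X w, Y w)) <= Hn P X + Hn P Y.
Proof.
move=> P0 P1.
have := Hn_submod X Y (fun _ => tt) P0.
rewrite Hn_const // addr0.
rewrite (@Hn_relabel _ _ _ _ P (fun w => (X w, Y w, tt)) (fun w => (X w, Y w))
   (fun p => (p, tt)) (fun t => t.1)) //.
rewrite (@Hn_relabel _ _ _ _ P (fun w => (X w, tt)) X (fun x => (x, tt)) (fun t => t.1)) //.
by rewrite (@Hn_relabel _ _ _ _ P (fun w => (Y w, tt)) Y (fun x => (x, tt)) (fun t => t.1)).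
Qed.

Lemma Hn_cond_mono (Om A B C : finType) (P : Om -> R) (X : Om -> A) (Y : Om -> B)
  (f : B -> C) :
  (forall w, 0 <= P w) ->
  Hn P (fun w => (X w, Y w)) - Hn P Y <=
  Hn P (fun w => (X w, f (Y w))) - Hn P (fun w => f (Y w)).
Proof.
move=> P0.
have := Hn_submod X Y (fun w => f (Y w)) P0.
rewrite (@Hn_relabel _ _ _ _ P (fun w => (X w, Y w, f (Y w))) (fun w => (X w, Y w))
   (fun p => (p.1, p.2, f p.2)) (fun t => t.1)) //.
rewrite (@Hn_relabel _ _ _ _ P (fun w => (Y w, f (Y w))) Y (fun y => (y, f y)) (fun t => t.1)) //.
lra.
Qed.

Lemma Hn_fun0 (Om A B : finType) (P : Om -> R) (X : Om -> A) (Y : Om -> B) :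
  (forall w, 0 <= P w) ->
  Hn P (fun w => (X w, Y w)) - Hn P Y = 0 ->
  forall w w', 0 < P w -> 0 < P w' -> Y w = Y w' -> X w = X w'.
Proof.
move=> P0 h0.
set pXY := dist P (fun w => (X w, Y w)).
set pY := dist P Y.
have hsub w : pXY (X w, Y w) <= pY (Y w).
  have := dist_sub (fun w => (X w, Y w)) (fun t : A * B => t.2) (X w, Y w) P0.
  by rewrite (dist_ext P (X' := Y)).
have hs : \sum_w P w * (ln (pY (Y w)) - ln (pXY (X w, Y w))) = 0.
  rewrite !HnE -/pXY -/pY in h0.
  rewrite (eq_bigr (fun w => P w * ln (pY (Y w)) - P w * ln (pXY (X w, Y w)))).
    by rewrite sumrB; lra.
  by move=> w _; rewrite mulrBr.
have hge w : 0 <= P w * (ln (pY (Y w)) - ln (pXY (X w, Y w))).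
  have [->|pw'] := eqVneq (P w) 0; first by rewrite mul0r.
  have pw : 0 < P w by rewrite lt0r pw' P0.
  have h1 := dist_pos (fun w => (X w, Y w)) P0 pw.
  have h2 := dist_pos Y P0 pw.
  by apply: mulr_ge0 => //; rewrite subr_ge0 ler_ln ?posrE.
have heq w : 0 < P w -> pXY (X w, Y w) = pY (Y w).
  move=> pw.
  have h1 := dist_pos (fun w => (X w, Y w)) P0 pw.
  have h2 := dist_pos Y P0 pw.
  have := psumr_eq0P (fun w _ => hge w) hs.
  move=> /(_ w isT) /eqP; rewrite mulf_eq0 (gt_eqF pw) /= subr_eq0 => /eqP.
  by move=> e; apply: ln_inj; rewrite ?posrE // e.
move=> w w' pw pw' eY; apply/eqP/negPn/negP => neq.
have h1 := heq w pw.
have h2 := dist_ge_pt (fun w => (X w, Y w)) w' P0.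
have hm := marg P X Y (Y w).
rewrite (bigD1 (X w)) // (bigD1 (X w')) /= in hm; last by rewrite eq_sym.
have : 0 <= \sum_(i | (i != X w) && (i != X w')) dist P (fun w => (X w, Y w)) (i, Y w).
  by apply: sumr_ge0 => i _; apply: dist_ge0.
rewrite -/pXY -/pY in hm h2 *.
rewrite -eY in h2.
lra.
Qed.

Lemma Hn_mix (Om A I : finType) (pi : I -> R) (Pk : I -> Om -> R) (P : Om -> R)
  (X : Om -> A) :
  (forall k, 0 <= pi k) -> (forall k w, 0 <= Pk k w) -> (forall k, \sum_w Pk k w = 1) ->
  (forall w, P w = \sum_k pi k * Pk k w) -> \sum_k pi k = 1 ->
  \sum_k pi k * Hn (Pk k) X <= Hn P X.
Proof.
move=> pi0 Pk0 Pk1 hP pi1.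
have P0 w : 0 <= P w by rewrite hP; apply: sumr_ge0 => k _; apply: mulr_ge0.
have P1 : \sum_w P w = 1.
  under eq_bigr do rewrite hP.
  rewrite exchange_big /= -[RHS]pi1; apply: eq_bigr => k _.
  by rewrite -big_distrr /= Pk1 mulr1.
have hd a : dist P X a = \sum_k pi k * dist (Pk k) X a.
  rewrite /dist; under eq_bigr do rewrite hP.
  rewrite exchange_big /=; apply: eq_bigr => k _.
  by rewrite big_distrr.
have step k : pi k * Hn (Pk k) X <=
    pi k * - \sum_a dist (Pk k) X a * ln (dist P X a).
  have [->|pk] := eqVneq (pi k) 0; first by rewrite !mul0r.
  have pk0 : 0 < pi k by rewrite lt0r pk pi0.
  rewrite ler_pM2l // /Hn lerN2.
  have g := @gibbs R A (dist (Pk k) X) (dist P X).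
  have := g (fun a => dist_ge0 X a (Pk0 k)) (fun a => dist_ge0 X a P0).
  have mn a : 0 < dist (Pk k) X a -> 0 < dist P X a.
    move=> h; rewrite hd (bigD1 k) //=.
    apply: lt_le_trans (_ : pi k * dist (Pk k) X a <= _).
      exact: mulr_gt0.
    rewrite lerDl; apply: sumr_ge0 => j _; apply: mulr_ge0 => //.
    exact: dist_ge0.
  move=> /(_ mn); rewrite !sum_dist P1 Pk1 subrr.
  rewrite (eq_bigr (fun a => dist (Pk k) X a * ln (dist P X a) -
                             dist (Pk k) X a * ln (dist (Pk k) X a))).
    by rewrite sumrB; lra.
  by move=> a _; rewrite mulrBr.
apply: le_trans (ler_sum _ (fun k _ => step k)) _.
rewrite /Hn.
under eq_bigr do rewrite mulrN big_distrr /=.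
rewrite sumrN exchange_big /= lerN2 le_eqVlt; apply/orP; left; apply/eqP.
apply: eq_bigr => a _; rewrite hd big_distrl /=.
by apply: eq_bigr => k _; rewrite mulrA.
Qed.

Lemma Hn_unif_indep (Om K B : finType) (P : Om -> R) (Th : Om -> K) (Y : Om -> B) :
  (forall w, 0 <= P w) -> \sum_w P w = 1 -> (0 < #|K|)%N ->
  Hn P (fun w => (Th w, Y w)) - Hn P Y = ln (#|K|%:R) ->
  forall k y, dist P (fun w => (Th w, Y w)) (k, y) = dist P Y y / #|K|%:R.
Proof.
move=> P0 P1 K0 h k y.
set Kr : R := #|K|%:R.
have Kr0 : 0 < Kr by rewrite ltr0n.
set mu := dist P (fun w => (Th w, Y w)).
pose nu (t : K * B) := dist P Y t.2 / Kr.
have m0 t : 0 <= mu t by exact: dist_ge0.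
have n0 t : 0 <= nu t by apply: divr_ge0; [exact: dist_ge0| exact: ltW].
have mn t : 0 < mu t -> 0 < nu t.
  move=> h1; apply: divr_gt0 => //; apply: lt_le_trans h1 _.
  have := dist_sub (fun w => (Th w, Y w)) (fun t : K * B => t.2) t P0.
  by rewrite (dist_ext P (X' := Y)).
have sm : \sum_t mu t = 1 by rewrite sum_dist.
have sn : \sum_t nu t = 1.
  rewrite sum_pair (eq_bigr (fun _ => 1 / Kr)).
    rewrite sumr_const (_ : #|xpredT| = #|K|) // -mulr_natr -/Kr mul1r mulVf // gt_eqF //.
  move=> i _; rewrite /nu /= -big_distrl /= sum_dist P1 //.
have hz : \sum_t mu t * (ln (nu t) - ln (mu t)) = 0.
  rewrite lotus.
  rewrite (eq_bigr (fun w => P w * ln (dist P Y (Y w)) - P w * ln Kr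
                    - P w * ln (mu (Th w, Y w)))).
    rewrite !sumrB -big_distrl /= P1 mul1r.
    rewrite !HnE -/mu in h; lra.
  move=> w _ /=.
  have [->|pw'] := eqVneq (P w) 0; first by rewrite !mul0r; lra.
  have pw : 0 < P w by rewrite lt0r pw' P0.
  have h2 := dist_pos Y P0 pw.
  by rewrite /nu /= ln_div ?posrE //; ring.
have := gibbs_eq m0 n0 mn hz; rewrite sn sm => /(_ erefl (k, y)).
by [].
Qed.

End Ineq2.

Section Ineq3.
Variable R : realType.

Lemma Hn_le_fun (Om A B : finType) (P : Om -> R) (X : Om -> A) (Y : Om -> B) (f : B -> A) :
  (forall w, 0 <= P w) -> (forall w, X w = f (Y w)) -> Hn P X <= Hn P Y.
Proof. by move=> P0 hX; rewrite (Hn_ext P hX); apply: Hn_mono. Qed.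

Lemma Hn_family (Om At : finType) (n : nat) (P : Om -> R) (Yf : 'I_n -> Om -> At)
  (S : {set 'I_n}) :
  (forall w, 0 <= P w) -> \sum_w P w = 1 ->
  Hn P (fun w => [ffun j => if j \in S then Some (Yf j w) else None])
  <= \sum_(j in S) Hn P (Yf j).
Proof.
move=> P0 P1; move Hc : #|S| => c; elim: c S Hc => [|c IH] S Hc.
  have S0 : S = set0 by apply/eqP; rewrite -cards_eq0 Hc.
  subst S; rewrite big_set0.
  rewrite (Hn_ext P (X' := fun _ => [ffun=> None])) ?Hn_const //.
  by move=> w; apply/ffunP => j; rewrite !ffunE in_set0.
have : (0 < #|S|)%N by rewrite Hc.
move=> /card_gt0P [j0 j0S].
rewrite (big_setD1 j0 j0S) /=.
have Hc' : #|S :\ j0| = c by rewrite (cardsD1 j0 S) j0S in Hc; case: Hc.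
have IH' := IH _ Hc'.
apply: le_trans (_ : _ <= Hn P (fun w => (Yf j0 w,
    [ffun j => if j \in S :\ j0 then Some (Yf j w) else None]))) _.
  apply: (Hn_le_fun (f := fun p : At * {ffun 'I_n -> option At} =>
       [ffun j => (if j == j0 then Some p.1 else p.2 j) : option At]) P0) => w.
  apply/ffunP => j; rewrite !ffunE in_setD1.
  by case: eqVneq => [->|]; rewrite ?j0S.
apply: le_trans (Hn_subadd _ _ P0 P1) _.
by rewrite lerD2l.
Qed.

End Ineq3.

Lemma shift_eq (V : zmodType) (y x x' : V) : (y + (x - x') == x) = (y == x').
Proof.
apply/eqP/eqP => [h|->]; last by rewrite addrC subrK.
by rewrite -[y](addrK (x - x')) h opprB addrC subrK.
Qed.

Section Gen4.
Variable R : realType.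

Lemma Hn_cond_le (Om K B : finType) (P : Om -> R) (Th : Om -> K) (Y : Om -> B) :
  (forall w, 0 <= P w) -> \sum_w P w = 1 -> (0 < #|K|)%N ->
  Hn P (fun w => (Th w, Y w)) - Hn P Y <= ln (#|K|%:R).
Proof.
move=> P0 P1 K0.
set Kr : R := #|K|%:R.
have Kr0 : 0 < Kr by rewrite ltr0n.
set mu := dist P (fun w => (Th w, Y w)).
pose nu (t : K * B) := dist P Y t.2 / Kr.
have m0 t : 0 <= mu t by exact: dist_ge0.
have n0 t : 0 <= nu t by apply: divr_ge0; [exact: dist_ge0| exact: ltW].
have mn t : 0 < mu t -> 0 < nu t.
  move=> h1; apply: divr_gt0 => //; apply: lt_le_trans h1 _.
  have := dist_sub (fun w => (Th w, Y w)) (fun t : K * B => t.2) t P0.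
  by rewrite (dist_ext P (X' := Y)).
have sm : \sum_t mu t = 1 by rewrite sum_dist.
have sn : \sum_t nu t = 1.
  rewrite sum_pair (eq_bigr (fun _ => 1 / Kr)).
    rewrite sumr_const (_ : #|xpredT| = #|K|) // -mulr_natr -/Kr mul1r mulVf // gt_eqF //.
  move=> i _; rewrite /nu /= -big_distrl /= sum_dist P1 //.
have g := gibbs m0 n0 mn.
rewrite sn sm subrr lotus in g.
rewrite (eq_bigr (fun w => P w * ln (dist P Y (Y w)) - P w * ln Kr
                    - P w * ln (mu (Th w, Y w)))) in g.
  rewrite !sumrB -big_distrl /= P1 mul1r in g.
  rewrite !HnE -/mu; lra.
move=> w _ /=.
have [->|pw'] := eqVneq (P w) 0; first by rewrite !mul0r; lra.
have pw : 0 < P w by rewrite lt0r pw' P0.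
have h2 := dist_pos Y P0 pw.
by rewrite /nu /= ln_div ?posrE //; ring.
Qed.

Lemma Hn_det (Om A B : finType) (P : Om -> R) (X : Om -> A) (Y : Om -> B) (x0 : A) :
  (forall w, 0 <= P w) -> (forall w w', Y w = Y w' -> X w = X w') ->
  Hn P (fun w => (X w, Y w)) = Hn P Y.
Proof.
move=> P0 h.
apply: (Hn_relabel (f := fun y => (if [pick w | Y w == y] is Some w then X w else x0, y))
                   (g := fun p => p.2)) => // w.
case: pickP => [w' /eqP hw|/(_ w)]; last by rewrite eqxx.
by rewrite (h w' w).
Qed.

Lemma Hn_dist_eq (Om Om' A : finType) (P : Om -> R) (P' : Om' -> R) (X : Om -> A) (X' : Om' -> A) :
  (forall a, dist P X a = dist P' X' a) -> Hn P X = Hn P' X'.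
Proof. by move=> h; rewrite /Hn; apply/congr1/eq_bigr => a _; rewrite h. Qed.

End Gen4.

Section PIR.
Variable R : realType.
Variables (T E : finType) (ends : E -> {set T}).
Hypothesis ends_inj : injective ends.
Hypothesis ends_card : forall f, #|ends f| = 2%N.
Variable L : nat.
Variables Qt At : finType.
Variable pu : E * {ffun T -> Qt} -> R.
Hypothesis pu_ge0 : forall x, 0 <= pu x.
Hypothesis pu_sum1 : \sum_x pu x = 1.
Hypothesis theta_unif : forall k : E, \sum_(q : {ffun T -> Qt}) pu (k, q) = #|E|%:R^-1.
Variable ans : T -> Qt -> {ffun E -> 'rV['F_2]_L} -> At.
Hypothesis ans_local : forall S q (W W' : {ffun E -> 'rV['F_2]_L}),
      (forall f, S \in ends f -> W f = W' f) -> ans S q W = ans S q W'.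
Variable S : T.
Variable delta : nat.
Variable nb : 'I_delta -> T.
Hypothesis nb_inj : injective nb.
Hypothesis nb_onto : forall U, (exists i, nb i = U) <-> neighbor ends S U.
Hypothesis reliable : centropy (pir_pmf pu) (@desired_rv T E Qt L)
                 (fun w => (answers_rv ans w, queries_rv w)) = 0.
Hypothesis private : forall S : T,
      centropy (pir_pmf pu) (@theta_rv T E Qt L)
               (fun w => (query_rv S w, stored_rv ends S w)) = log2 (#|E|%:R : R).

Local Notation Om := (Omega T E Qt L).
Local Notation Wt := {ffun E -> 'rV['F_2]_L}.
Local Notation P := (pir_pmf (R:=R) (L:=L) pu).
Definition cW : R := ((2 ^+ L)^-1) ^+ #|E|.
Definition uW (W : Wt) : R := cW.

Lemma card_rV : #|{: 'rV['F_2]_L}| = (2 ^ L)%N.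
Proof. by rewrite card_mx card_Fp // mul1n. Qed.

Lemma cW_gt0 : 0 < cW.
Proof. by rewrite /cW exprn_gt0 // invr_gt0 exprn_gt0. Qed.

Lemma uW_sum : \sum_W uW W = 1.
Proof.
rewrite /uW sumr_const (_ : #|xpredT| = #|Wt|) // card_ffun card_rV.
rewrite -mulr_natr natrX natrX /cW -exprMn mulVf ?expr1n //.
by rewrite expf_neq0 // pnatr_eq0.
Qed.

Lemma P_ge0 w : 0 <= P w.
Proof. by rewrite /pir_pmf mulr_ge0 // ltW // cW_gt0. Qed.

Lemma sum_pt (F : Om -> R) :
  \sum_w F w = \sum_x1 \sum_W F (x1, W).
Proof. exact: sum_pair. Qed.

Lemma P_sum1 : \sum_w P w = 1.
Proof.
rewrite sum_pt -[RHS]pu_sum1; apply: eq_bigr => x1 _.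
by rewrite /pir_pmf /= -big_distrr /= -/cW -[X in _ * X]/(\sum_W uW W) uW_sum mulr1.
Qed.

Lemma K_gt0 : (0 < #|E|)%N.
Proof.
case: (pickP (fun _ : E => true)) => [e0 _|none]; first by apply/card_gt0P; exists e0.
move: pu_sum1; rewrite big1 => [/eqP|x _]; first by rewrite eq_sym oner_eq0.
by have := none x.1.
Qed.

Lemma ex_e j : exists f, ends f == [set S; nb j].
Proof.
have [h _] := nb_onto (nb j); have [f hf] := h (ex_intro _ j erefl).
by exists f; rewrite hf.
Qed.

Definition e j := xchoose (ex_e j).

Lemma ends_e j : ends (e j) = [set S; nb j].
Proof. exact: eqP (xchooseP (ex_e j)). Qed.

Lemma nb_neq j : S != nb j.
Proof. by have := ends_card (e j); rewrite ends_e cards2; case: (S != nb j). Qed.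

Lemma e_inj : injective e.
Proof.
move=> j j' h; have := congr1 ends h; rewrite !ends_e => h2.
have : nb j \in [set S; nb j'] by rewrite -h2 !inE eqxx orbT.
rewrite !inE eq_sym (negbTE (nb_neq j)) /= => /eqP; exact: nb_inj.
Qed.

Lemma in_ends_e T0 j : T0 \in ends (e j) -> T0 = S \/ T0 = nb j.
Proof. by rewrite ends_e !inE => /orP [] /eqP; [left|right]. Qed.

Definition late (n : nat) (f : E) : bool :=
  [exists j : 'I_delta, (n <= j)%N && (e j == f)].

Definition Cn (n : nat) (W : Wt) : {ffun E -> option 'rV['F_2]_L} :=
  [ffun f => if late n f then None else Some (W f)].

Lemma late_e (i : 'I_delta) : late i (e i).
Proof. by apply/existsP; exists i; rewrite leqnn eqxx. Qed.

Lemma late_succ (i : 'I_delta) f : f != e i -> late i f = late i.+1 f.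
Proof.
move=> fe; apply/existsP/existsP => [[j /andP[hij /eqP ejf]]|[j /andP [hij hf]]].
  exists j; rewrite ejf eqxx andbT ltn_neqAle hij andbT.
  apply/negP => /eqP h; have ji : j = i by apply/val_inj; rewrite /= -h.
  by move: fe; rewrite -ejf ji eqxx.
by exists j; rewrite hf andbT ltnW.
Qed.

Lemma late_succ_e (i : 'I_delta) : late i.+1 (e i) = false.
Proof.
by apply/existsP => -[j /andP[h /eqP /e_inj ji]]; move: h; rewrite ji ltnn.
Qed.

Lemma late_mono n f : late n.+1 f -> late n f.
Proof.
by move=> /existsP [j /andP [h1 h2]]; apply/existsP; exists j; rewrite h2 ltnW.
Qed.

Lemma late_delta f : late delta f = false.
Proof. by apply/existsP => -[j /andP [h _]]; move: h; rewrite leqNgt ltn_ord. Qed.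

Lemma uW_gt0 W : 0 < uW W.
Proof. exact: cW_gt0. Qed.

Lemma uW_ge0 W : 0 <= uW W.
Proof. exact: ltW (uW_gt0 W). Qed.

Lemma unif_XC (i : 'I_delta) :
  Hn uW (fun W : Wt => (W (e i), Cn i W)) - Hn uW (Cn i) = L%:R * ln 2.
Proof.
set X := fun W : Wt => W (e i).
set C := Cn i.
have trans x x' c : dist uW (fun W => (X W, C W)) (x, c) =
                    dist uW (fun W => (X W, C W)) (x', c).
  pose d := x - x'.
  pose sig (W : Wt) : Wt := [ffun f => if f == e i then W f + d else W f].
  have sig_inj : injective sig.
    move=> W1 W2 h; apply/ffunP => f; have := congr1 (fun W : Wt => W f) h.
    rewrite /sig !ffunE; case: eqP => _ //; exact: addIr.
  rewrite /dist (reindex_inj sig_inj); apply: eq_bigl => W.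
  have -> : C (sig W) = C W.
    apply/ffunP => f; rewrite /C /Cn !ffunE; case: ifP => // hl.
    rewrite /sig ?ffunE; case: eqVneq => // hf.
    by rewrite hf late_e in hl.
  by rewrite /X /sig ?ffunE eqxx !xpair_eqE shift_eq.
have N0 : ((2 ^ L)%:R : R) != 0 by rewrite pnatr_eq0 expn_eq0.
have hm x c : dist uW (fun W => (X W, C W)) (x, c) = dist uW C c / (2 ^ L)%:R.
  have := marg uW X C c.
  rewrite (eq_bigr (fun _ => dist uW (fun W => (X W, C W)) (x, c))); last first.
    by move=> x' _; exact: trans.
  rewrite sumr_const (_ : #|xpredT| = #|{: 'rV['F_2]_L}|) // card_rV => <-.
  by rewrite -(mulr_natr (dist _ _ _)) mulfK.
rewrite !HnE.
rewrite (eq_bigr (fun W => uW W * ln (dist uW C (C W)) - uW W * ln (2 ^ L)%:R)); last first.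
  move=> W _; rewrite hm ln_div ?mulrBr // posrE.
    exact: (dist_pos C uW_ge0 (uW_gt0 W)).
  by rewrite ltr0n expn_gt0.
rewrite sumrB -big_distrl /= uW_sum mul1r natrX lnXn // mulr_natl.
lra.
Qed.

Lemma ln2_gt0 : 0 < ln (2 : R).
Proof. by apply: ln_gt0; rewrite ltr1n. Qed.

Lemma centropyE (Om A B : finType) (Pm : Om -> R) (X : Om -> A) (Y : Om -> B) :
  centropy Pm X Y = (Hn Pm (fun w => (X w, Y w)) - Hn Pm Y) / ln 2.
Proof. by rewrite /centropy !entropyE mulrBl. Qed.

Lemma sumcW : \sum_(W : Wt) cW = 1.
Proof. exact: uW_sum. Qed.

Lemma distP1 (B : finType) (Z : E * {ffun T -> Qt} -> B) b :
  dist P (fun w => Z w.1) b = dist pu Z b.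
Proof.
rewrite /dist big_mkcond sum_pt [RHS]big_mkcond; apply: eq_bigr => x1 _ /=.
case: ifP => _; last by rewrite big1.
by rewrite /pir_pmf /= -big_distrr /= -/cW sumcW mulr1.
Qed.

Lemma priv_dist T0 k a :
  dist pu (fun x => (x.1, x.2 T0)) (k, a) = dist pu (fun x => x.2 T0) a / #|E|%:R.
Proof.
have h1 : Hn P (fun w => (theta_rv w, (query_rv T0 w, stored_rv ends T0 w))) -
          Hn P (fun w => (query_rv T0 w, stored_rv ends T0 w)) = ln (#|E|%:R).
  have := private T0; rewrite centropyE /log2 => /(mulIf _); apply.
  by rewrite invr_eq0 gt_eqF // ln2_gt0.
have h2 := Hn_cond_mono (@theta_rv T E Qt L)
   (fun w => (query_rv T0 w, stored_rv ends T0 w)) (fun p => p.1) P_ge0.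
have h3 := Hn_cond_le (@theta_rv T E Qt L) (query_rv T0) P_ge0 P_sum1 K_gt0.
have h4 : Hn P (fun w => (theta_rv w, query_rv T0 w)) - Hn P (query_rv T0) = ln (#|E|%:R).
  apply/le_anti; rewrite h3 /=; rewrite -h1; exact: h2.
have := Hn_unif_indep P_ge0 P_sum1 K_gt0 h4 k a.
have e1 := distP1 (fun x => (x.1, x.2 T0)) (k, a).
have e2 := distP1 (fun x => x.2 T0) a.
by rewrite -e1 -e2.
Qed.

Lemma priv_phi T0 k (phi : Qt -> R) :
  \sum_q pu (k, q) * phi (q T0) = (\sum_x pu x * phi (x.2 T0)) / #|E|%:R.
Proof.
pose F (t : E * Qt) := if t.1 == k then phi t.2 else 0.
have e1 : \sum_q pu (k, q) * phi (q T0) = \sum_x pu x * F (x.1, x.2 T0).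
  rewrite [RHS]sum_pair (bigD1 k) //= [X in _ + X]big1 ?addr0.
    by apply: eq_bigr => q _; rewrite /F /= eqxx.
  by move=> e0 he; apply: big1 => q _; rewrite /F /= (negbTE he) mulr0.
rewrite e1 -(lotus pu (fun x => (x.1, x.2 T0)) F) sum_pair (bigD1 k) //= [X in _ + X]big1 ?addr0.
  rewrite /F /= eqxx -(lotus pu (fun x => x.2 T0) phi) big_distrl /=.
  by apply: eq_bigr => a _; rewrite priv_dist mulrAC.
by move=> e0 he; apply: big1 => a _; rewrite /F /= (negbTE he) mulr0.
Qed.

Lemma mix_ans T0 :
  \sum_x pu x * Hn uW (ans T0 (x.2 T0)) <= Hn P (answer_rv ans T0).
Proof.
pose Pk (x : E * {ffun T -> Qt}) (w : Om) := if w.1 == x then cW else 0.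
have Pk0 x w : 0 <= Pk x w by rewrite /Pk; case: ifP => // _; exact: ltW cW_gt0.
have Pk1 x : \sum_w Pk x w = 1.
  rewrite sum_pt (bigD1 x) //= [X in _ + X]big1 ?addr0.
    by rewrite /Pk /= eqxx sumcW.
  by move=> x' hx; apply: big1 => W _; rewrite /Pk /= (negbTE hx).
have hP w : P w = \sum_x pu x * Pk x w.
  rewrite (bigD1 w.1) //= [X in _ + X]big1 ?addr0.
    by rewrite /Pk eqxx.
  by move=> x hx; rewrite /Pk eq_sym (negbTE hx) mulr0.
have hm := Hn_mix (answer_rv ans T0) pu_ge0 Pk0 Pk1 hP pu_sum1.
suff -> : \sum_x pu x * Hn uW (ans T0 (x.2 T0)) =
          \sum_x pu x * Hn (Pk x) (answer_rv ans T0) by [].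
apply: eq_bigr => x _; congr (_ * _); apply: Hn_dist_eq => b.
rewrite /dist big_mkcond [RHS]big_mkcond [RHS]sum_pt (bigD1 x) //= [X in _ + X]big1 ?addr0.
  by apply: eq_bigr => W _; rewrite /Pk /= eqxx.
by move=> x' hx; apply: big1 => W _; rewrite /Pk /= (negbTE hx); case: ifP.
Qed.

Lemma rel_fun w w' : 0 < P w -> 0 < P w' ->
  (answers_rv ans w, queries_rv w) = (answers_rv ans w', queries_rv w') ->
  desired_rv w = desired_rv w'.
Proof.
have h : Hn P (fun w => (desired_rv w, (answers_rv ans w, queries_rv w))) -
         Hn P (fun w => (answers_rv ans w, queries_rv w)) = 0.
  move: reliable; rewrite centropyE => /eqP; rewrite mulf_eq0 invr_eq0.
  by rewrite (gt_eqF ln2_gt0) orbF => /eqP.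
exact: (Hn_fun0 P_ge0 h).
Qed.

Definition hC (n : nat) (a : Qt) : R :=
  Hn uW (fun W => (ans S a W, Cn n W)) - Hn uW (Cn n).

Definition J (n : nat) (a : Qt) : R := hC n a - hC n.+1 a.

Lemma J_ge0 n a : 0 <= J n a.
Proof.
rewrite /J /hC subr_ge0.
pose restr (c : {ffun E -> option 'rV['F_2]_L}) :=
  [ffun g => if late n g then None else c g].
have hr W : restr (Cn n.+1 W) = Cn n W.
  apply/ffunP => g; rewrite /restr /Cn !ffunE.
  case: ifP => // hl; case: ifP => // /late_mono; by rewrite hl.
have := Hn_cond_mono (ans S a) (Cn n.+1) restr uW_ge0.
rewrite (Hn_ext uW (X := fun W => (ans S a W, restr (Cn n.+1 W)))
                   (X' := fun W => (ans S a W, Cn n W))); last by move=> W; rewrite hr.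
by rewrite (Hn_ext uW (X := fun W => restr (Cn n.+1 W)) (X' := Cn n)).
Qed.

Lemma sumJ a : \sum_(i < delta) J i a <= Hn uW (ans S a).
Proof.
have -> : \sum_(i < delta) J i a = hC 0 a - hC delta a.
  rewrite (eq_bigr (fun i : 'I_delta => - (hC i.+1 a - hC i a))); last first.
    by move=> i _; rewrite opprB.
  rewrite sumrN -(big_mkord xpredT (fun i => hC i.+1 a - hC i a)).
  by rewrite telescope_sumr // opprB.
have h0 : hC delta a = 0.
  rewrite /hC; apply/eqP; rewrite subr_eq0; apply/eqP.
  apply: (@Hn_relabel _ _ _ _ uW (fun W => (ans S a W, Cn delta W)) (Cn delta)
    (fun c : {ffun E -> option 'rV['F_2]_L} => (ans S a [ffun g => odflt 0 (c g)], c))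
    (fun p => p.2) uW_ge0) => // W.
  congr (_, _); congr (ans S a _); apply/ffunP => g.
  by rewrite /Cn !ffunE late_delta.
rewrite h0 subr0 /hC.
have := Hn_subadd (ans S a) (Cn 0) uW_ge0 uW_sum.
lra.
Qed.

Definition Bi (i : 'I_delta) (q : {ffun T -> Qt}) (W : Wt) : {ffun 'I_delta -> option At} :=
  [ffun j => if j \in [set j : 'I_delta | (i <= j)%N] then Some (ans (nb j) (q (nb j)) W)
             else None].

Definition restr (n : nat) (c : {ffun E -> option 'rV['F_2]_L}) : {ffun E -> option 'rV['F_2]_L} :=
  [ffun g => if late n g then None else c g].

Definition ext (i : 'I_delta) (x : 'rV['F_2]_L) (c : {ffun E -> option 'rV['F_2]_L}) :
  {ffun E -> option 'rV['F_2]_L} := [ffun g => if g == e i then Some x else c g].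

Lemma hext (i : 'I_delta) W : Cn i.+1 W = ext i (W (e i)) (Cn i W).
Proof.
apply/ffunP => g; rewrite /ext /Cn !ffunE.
case: eqVneq => [->|hg]; first by rewrite late_succ_e.
by rewrite (late_succ hg).
Qed.

Lemma hres (n : nat) W : Cn n W = restr n (Cn n.+1 W).
Proof.
apply/ffunP => g; rewrite /restr /Cn !ffunE.
case: ifP => // hl; case: ifP => // /late_mono; by rewrite hl.
Qed.

Lemma hXr (i : 'I_delta) (W : Wt) : W (e i) = odflt 0 (Cn i.+1 W (e i)).
Proof. by rewrite /Cn ffunE late_succ_e. Qed.

Lemma per_iq (i : 'I_delta) (q : {ffun T -> Qt}) : 0 < pu (e i, q) ->
  L%:R * ln 2 <= J i (q S) +
     \sum_(j < delta | (i <= j)%N) Hn uW (ans (nb j) (q (nb j))).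
Proof.
move=> hpu.
have hU := unif_XC i.
have hrel W W' : (ans S (q S) W, Bi i q W, Cn i W) = (ans S (q S) W', Bi i q W', Cn i W') ->
                 W (e i) = W' (e i).
  case=> hA hB hC.
  have pw W0 : 0 < P ((e i, q), W0) by rewrite /pir_pmf mulr_gt0 // cW_gt0.
  apply: (rel_fun (pw W) (pw W')).
  congr (_, _); apply/ffunP => T0; rewrite !ffunE /=.
  have [-> //|TS] := eqVneq T0 S.
  case: (pickP (fun j : 'I_delta => (i <= j)%N && (nb j == T0))) => [j /andP [hij /eqP hj]|none].
    have := congr1 (fun b : {ffun 'I_delta -> option At} => b j) hB; rewrite /Bi !ffunE inE hij => -[].
    by rewrite hj.
  apply: ans_local => f hf.
  have := congr1 (fun c : {ffun E -> option 'rV['F_2]_L} => c f) hC; rewrite /Cn !ffunE.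
  case: ifP => [hl _|_ [] //].
  exfalso; move/existsP: hl => [j /andP [hij /eqP ejf]].
  rewrite -ejf in hf; case: (in_ends_e hf) => hT; first by rewrite hT eqxx in TS.
  by have := none j; rewrite hij hT eqxx.
have hdet : Hn uW (fun W => (W (e i), (ans S (q S) W, Bi i q W, Cn i W))) =
            Hn uW (fun W => (ans S (q S) W, Bi i q W, Cn i W)).
  by apply: (Hn_det 0 uW_ge0) => W W'; exact: hrel.
have hC1 : Hn uW (Cn i.+1) = Hn uW (fun W => (W (e i), Cn i W)).
  apply: (@Hn_relabel _ _ _ _ uW (Cn i.+1) (fun W => (W (e i), Cn i W))
     (fun p => ext i p.1 p.2)
     (fun c : {ffun E -> option 'rV['F_2]_L} => (odflt 0 (c (e i)), restr i c)) uW_ge0) => W.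
    exact: hext.
  by rewrite -hXr -hres.
have hAC1 : Hn uW (fun W => (ans S (q S) W, Cn i.+1 W)) =
            Hn uW (fun W => (W (e i), ans S (q S) W, Cn i W)).
  apply: (@Hn_relabel _ _ _ _ uW (fun W => (ans S (q S) W, Cn i.+1 W))
     (fun W => (W (e i), ans S (q S) W, Cn i W))
     (fun p : 'rV['F_2]_L * At * {ffun E -> option 'rV['F_2]_L} => (p.1.2, ext i p.1.1 p.2))
     (fun p : At * {ffun E -> option 'rV['F_2]_L} => (odflt 0 (p.2 (e i)), p.1, restr i p.2))
     uW_ge0) => W /=.
    by rewrite hext.
  by rewrite -hXr -hres.
have hmono : Hn uW (fun W => (W (e i), ans S (q S) W, Cn i W)) <=
             Hn uW (fun W => (W (e i), (ans S (q S) W, Bi i q W, Cn i W))).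
  by apply: (@Hn_le_fun _ _ _ _ uW _ _
     (fun p : 'rV['F_2]_L * (At * {ffun 'I_delta -> option At} * {ffun E -> option 'rV['F_2]_L})
        => (p.1, p.2.1.1, p.2.2)) uW_ge0).
have hsub : Hn uW (fun W => (ans S (q S) W, Bi i q W, Cn i W)) <=
            Hn uW (fun W => (ans S (q S) W, Cn i W)) + Hn uW (Bi i q).
  apply: le_trans (Hn_subadd (fun W => (ans S (q S) W, Cn i W)) (Bi i q) uW_ge0 uW_sum).
  by apply: (@Hn_le_fun _ _ _ _ uW _ _
     (fun p : At * {ffun E -> option 'rV['F_2]_L} * {ffun 'I_delta -> option At}
        => (p.1.1, p.2, p.1.2)) uW_ge0).
have hfam : Hn uW (Bi i q) <= \sum_(j in [set j : 'I_delta | (i <= j)%N])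
                                 Hn uW (ans (nb j) (q (nb j))) :=
  @Hn_family _ _ _ _ uW (fun j => ans (nb j) (q (nb j))) _ uW_ge0 uW_sum.
have hsum : \sum_(j in [set j : 'I_delta | (i <= j)%N]) Hn uW (ans (nb j) (q (nb j))) =
            \sum_(j < delta | (i <= j)%N) Hn uW (ans (nb j) (q (nb j))).
  by apply: eq_bigl => j; rewrite inE.
rewrite hsum in hfam.
rewrite /J /hC hC1 hAC1.
lra.
Qed.

Lemma main_ineq :
  entropy P (answer_rv ans S)
  >= \sum_(i < delta)
       Num.max 0 (L%:R - \sum_(j < delta | (i <= j)%N)
                           entropy P (answer_rv ans (nb j))).
Proof.
set K : R := #|E|%:R.
have K0 : 0 < K by rewrite ltr0n K_gt0.
have l20 := ln2_gt0.
pose M (i : 'I_delta) := K * \sum_q pu (e i, q) * J i (q S).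
have Mge0 i : 0 <= M i.
  apply: mulr_ge0; first exact: ltW.
  by apply: sumr_ge0 => q _; apply: mulr_ge0 => //; exact: J_ge0.
have Mb (i : 'I_delta) : L%:R * ln 2 - \sum_(j < delta | (i <= j)%N) Hn P (answer_rv ans (nb j)) <= M i.
  have h1 : K * \sum_q pu (e i, q) * (L%:R * ln 2 -
              \sum_(j < delta | (i <= j)%N) Hn uW (ans (nb j) (q (nb j)))) <= M i.
    rewrite /M ler_pM2l //; apply: ler_sum => q _.
    have [hq|hq] := eqVneq (pu (e i, q)) 0; first by rewrite hq !mul0r.
    have hq' : 0 < pu (e i, q) by rewrite lt0r hq pu_ge0.
    rewrite ler_pM2l //; have := per_iq hq'; lra.
  have h2 : K * \sum_q pu (e i, q) * (L%:R * ln 2 -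
              \sum_(j < delta | (i <= j)%N) Hn uW (ans (nb j) (q (nb j)))) =
            L%:R * ln 2 - \sum_(j < delta | (i <= j)%N)
                             \sum_x pu x * Hn uW (ans (nb j) (x.2 (nb j))).
    rewrite (eq_bigr (fun q => pu (e i, q) * (L%:R * ln 2) -
        \sum_(j < delta | (i <= j)%N) pu (e i, q) * Hn uW (ans (nb j) (q (nb j))))); last first.
      by move=> q _; rewrite mulrBr big_distrr.
    rewrite sumrB exchange_big /= -big_distrl /= theta_unif mulrBr mulrA -/K.
    rewrite !mulrA mulfV ?gt_eqF // mul1r big_distrr /=.
    congr (_ - _); apply: eq_bigr => j _.
    have := priv_phi (nb j) (e i) (fun a => Hn uW (ans (nb j) a)); rewrite /= => ->.
    by rewrite mulrCA mulfV ?gt_eqF // mulr1.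
  have h3 : \sum_(j < delta | (i <= j)%N) \sum_x pu x * Hn uW (ans (nb j) (x.2 (nb j)))
            <= \sum_(j < delta | (i <= j)%N) Hn P (answer_rv ans (nb j)).
    by apply: ler_sum => j _; exact: mix_ans.
  lra.
have Msum : \sum_i M i <= Hn P (answer_rv ans S).
  have e1 : \sum_i M i = \sum_x pu x * \sum_(i < delta) J i (x.2 S).
    rewrite /M (eq_bigr (fun i : 'I_delta => \sum_x pu x * J i (x.2 S))).
      by rewrite exchange_big; apply: eq_bigr => x _; rewrite big_distrr.
    move=> i _; have := priv_phi S (e i) (fun a => J i a); rewrite /= => ->.
    by rewrite mulrCA mulfV ?gt_eqF // mulr1.
  rewrite e1; apply: le_trans (mix_ans S); apply: ler_sum => x _.
  by rewrite ler_wpM2l //; exact: sumJ.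
rewrite entropyE.
apply: le_trans (_ : \sum_i (M i / ln 2) <= _); last first.
  by rewrite -big_distrl /= ler_pM2r ?invr_gt0.
apply: ler_sum => i _.
rewrite ge_max; apply/andP; split; first by apply: divr_ge0 => //; exact: ltW.
have -> : \sum_(j < delta | (i <= j)%N) entropy P (answer_rv ans (nb j)) =
          (\sum_(j < delta | (i <= j)%N) Hn P (answer_rv ans (nb j))) / ln 2.
  by rewrite big_distrl /=; apply: eq_bigr => j _; rewrite entropyE.
by rewrite -(ler_pM2r l20) mulrBl !divfK ?gt_eqF.
Qed.

End PIR.

Unset Implicit Arguments.
Set Strict Implicit.

Theorem theorem2
  (R : realType)
  (* the graph: servers T, files E with endpoint sets [ends] *)
  (T E : finType) (ends : E -> {set T})
  (ends_inj : injective ends)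
  (ends_card : forall f, #|ends f| = 2%N)
  (* file length *)
  (L : nat)
  (* query and answer alphabets *)
  (Qt At : finType)
  (* user's joint pmf of (theta, (Q_T)_T) *)
  (pu : E * {ffun T -> Qt} -> R)
  (pu_ge0 : forall x, 0 <= pu x)
  (pu_sum1 : \sum_x pu x = 1)
  (theta_unif : forall k : E, \sum_(q : {ffun T -> Qt}) pu (k, q) = #|E|%:R^-1)
  (* answer functions: A_S = ans S Q_S W, depending only on W_S *)
  (ans : T -> Qt -> {ffun E -> 'rV['F_2]_L} -> At)
  (ans_local : forall S q (W W' : {ffun E -> 'rV['F_2]_L}),
      (forall f, S \in ends f -> W f = W' f) -> ans S q W = ans S q W')
  (* reliability: H(W_theta | all answers, all queries) = 0 *)
  (reliable : centropy (pir_pmf pu) (@desired_rv T E Qt L)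
                 (fun w => (answers_rv ans w, queries_rv w)) = 0)
  (* privacy: H(theta | Q_S, W_S) = log K for every server S *)
  (private : forall S : T,
      centropy (pir_pmf pu) (@theta_rv T E Qt L)
               (fun w => (query_rv S w, stored_rv ends S w)) = log2 (#|E|%:R : R))
  (* a server S of degree delta with an enumeration of its neighbours *)
  (S : T) (delta : nat) (deg_S : degree ends S = delta)
  (nb : 'I_delta -> T) (nb_inj : injective nb)
  (nb_onto : forall U, (exists i, nb i = U) <-> neighbor ends S U) :
  entropy (pir_pmf pu) (answer_rv ans S)
  >= \sum_(i < delta)
       Num.max 0 (L%:R - \sum_(j < delta | (i <= j)%N)
                           entropy (pir_pmf pu) (answer_rv ans (nb j))).
Proof.
by apply: main_ineq.
Qed.
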